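(* Let $\Lambda$ be a hypergraph on a finite vertex set $V$ (given as a map $\Lambda:\mathcal{P}(V)\to\mathbb{Z}^+$, $\Lambda(A)$ being the number of hyperedges over $A$), and let $A\subseteq V$. Then $A$ is essential for $\Lambda$ if and only if $\Lambda(A)=1$ and $|A\setminus V^*(\Lambda\mathbb{1}_{\{A\}^C})|=1$.
   Context: $\Lambda\mathbb{1}_{\{A\}^C}$ denotes the hypergraph obtained from $\Lambda$ by removing all hyperedges over the set $A$ (i.e. setting the multiplicity of $A$ to $0$). Hyperedges over singleton sets are called patches. Identifiable vertices: repeatedly pick a vertex carrying a patch, delete that vertex and the patch, and collapse every other hyperedge containing it onto its remaining vertices; continue until no patches remain. The set of removed vertices does not depend on the order of choices and is denoted $V^*(\Lambda)$. A set $A\subseteq V$ is called essential for $\Lambda$ if $\Lambda(A)=1$ and $V^*(\Lambda\mathbb{1}_{\{A\}^C})\neq V^*(\Lambda)$. *)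

(* Defs.v *)
From mathcomp Require Import all_boot.
Set Implicit Arguments. Unset Strict Implicit. Unset Printing Implicit Defensive.

Definition hypergraph (V : finType) := {ffun {set V} -> nat}.

Section Peel.
Variable V : finType.

Definition remove_edge (L : hypergraph V) (A : {set V}) : hypergraph V :=
  [ffun B : {set V} => if B == A then 0 else L B].

(* One peeling step at a vertex v carrying a patch: delete v and one patch
   {v}; every other hyperedge B containing v is collapsed onto B :\ v.
   The collapsed hypergraph lives on V \ {v} (sets containing v get 0). *)
Definition peel_step (L : hypergraph V) (v : V) : hypergraph V :=
  [ffun C : {set V} => if v \in C then 0
             else L C + L (v |: C) - (C == set0)].

Definition peel_round (st : hypergraph V * {set V}) : hypergraph V * {set V} :=
  match [pick v | 0 < st.1 [set v]] with
  | Some v => (peel_step st.1 v, v |: st.2)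
  | None => st
  end.

(* Each vertex is removed at most once, so #|V| rounds reach termination.
   V*(L) = set of removed vertices (independent of choice order). *)
Definition Vstar (L : hypergraph V) : {set V} :=
  (iter #|V| peel_round (L, set0)).2.

Definition essential (L : hypergraph V) (A : {set V}) : Prop :=
  L A = 1 /\ Vstar (remove_edge L A) <> Vstar L.

End Peel.

(* Main.v *)
Require Import Defs.
From mathcomp Require Import all_boot.
Set Implicit Arguments. Unset Strict Implicit. Unset Printing Implicit Defensive.

Section Proof.
Variable V : finType.
Implicit Types (L M : hypergraph V) (S T B C : {set V}).

Definition closedH L T := forall B, 0 < L B -> forall v, v \in B -> B :\ v \subset T -> v \in T.

Ltac bs x v :=
  rewrite ?inE; case: (eqVneq x v) => [->|]; [rewrite /= ?eqxx /= | let H := fresh "H" in move/negPf=> H; rewrite /= ?H /=];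
  repeat match goal with H : (v \in ?A) = ?b |- context [v \in ?A] => rewrite H /= end;
  repeat (match goal with |- context [?a \in ?A] => case: (a \in A) end);
  by intros; try discriminate.

Lemma set10 (v : V) : [set v] != set0.
Proof. by apply/set0Pn; exists v; rewrite inE. Qed.

Definition inv L (st : hypergraph V * {set V}) :=
  forall C, C != set0 ->
   (0 < st.1 C <-> C :&: st.2 = set0 /\ exists B, 0 < L B /\ B :\: st.2 = C).

Lemma inv0 L : inv L (L, set0).
Proof.
move=> C _ /=; split.
  by move=> H; split; [rewrite setI0|exists C; rewrite setD0].
by case=> _ [B [HB]]; rewrite setD0 => <-.
Qed.

Lemma inv_pick L st v : inv L st -> 0 < st.1 [set v] -> v \notin st.2.
Proof.
move=> Hi Hv; have [/= H _] := Hi [set v] (set10 v).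
have [H1 _] := H Hv; apply/negP=> vS.
have : v \in [set v] :&: st.2 by rewrite !inE eqxx.
by rewrite H1 inE.
Qed.

Lemma inv_round L st : inv L st -> inv L (peel_round st).
Proof.
move=> Hi; rewrite /peel_round; case: pickP => [v Hv|//].
have vS := inv_pick Hi Hv.
case: st Hi Hv vS => M S Hi Hv vS /=.
have vS' := negPf vS; simpl in *.
move=> C C0; rewrite ffunE.
case vC: (v \in C).
  split => //; case=> HC _.
  have : v \in C :&: (v |: S) by rewrite !inE vC eqxx.
  by rewrite HC inE.
rewrite (negPf C0) subn0 addn_gt0.
have vC0 : v |: C != set0 by apply/set0Pn; exists v; rewrite !inE eqxx.
have [H1 H2] := Hi C C0; have [H3 H4] := Hi _ vC0.
split.
  case/orP => [/H1 [HCS [B [HB HBC]]]|/H3 [HCS [B [HB HBC]]]].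
    split.
      apply/setP=> x; move/setP: HCS => /(_ x); bs x v.
    exists B; split => //; apply/setP=> x; move/setP: HBC => /(_ x); bs x v.
  split.
    apply/setP=> x; move/setP: HCS => /(_ x); bs x v.
  exists B; split => //; apply/setP=> x; move/setP: HBC => /(_ x); bs x v.
case=> HCS [B [HB HBC]].
case vB: (v \in B).
  apply/orP; right; apply/H4; split.
    apply/setP=> x; move/setP: HCS => /(_ x); bs x v.
  exists B; split => //; apply/setP=> x; move/setP: HBC => /(_ x); bs x v.
apply/orP; left; apply/H2; split.
  apply/setP=> x; move/setP: HCS => /(_ x); bs x v.
exists B; split => //; apply/setP=> x; move/setP: HBC => /(_ x); bs x v.
Qed.

Definition st L k := iter k (@peel_round V) (L, set0).

Lemma inv_st L k : inv L (st L k).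
Proof. elim: k => [|k IH]; [exact: inv0| exact: inv_round]. Qed.

Lemma prog L k : k <= #|(st L k).2| \/ [pick v | 0 < (st L k).1 [set v]] = None.
Proof.
elim: k => [|k IH]; first by left.
rewrite /st iterS -/(st L k).
have Hi := inv_st L k.
rewrite /peel_round; case: pickP => [v Hv|Hn].
  left => /=; rewrite cardsU1 (inv_pick Hi Hv) /=.
  case: IH => [H|]; first by rewrite add1n ltnS.
  by case: pickP => [w _ //|Hn _]; move: (Hv); rewrite Hn.
right; case: pickP => // w; by rewrite Hn.
Qed.

Lemma Vstar_closed L : closedH L (Vstar L).
Proof.
have Hi := inv_st L #|V|.
have Hn : [pick v | 0 < (st L #|V|).1 [set v]] = None.
  case: (prog L #|V|) => // H.
  case: pickP => // v Hv; have := inv_pick Hi Hv.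
  have : (st L #|V|).2 = setT.
    by apply/eqP; rewrite eqEcard subsetT cardsT H.
  by move=> ->; rewrite inE.
move=> B HB v vB sub; apply/negPn/negP => vS.
move: Hn; case: pickP => // Hn _.
have [_ H] := Hi [set v] (set10 v).
have := Hn v; rewrite H //; split.
  apply/setP=> x; rewrite !inE; case: eqP => [->|] //=; by rewrite (negPf vS).
exists B; split => //; apply/setP=> x; rewrite !inE.
case: eqP => [->|nx] /=; first by rewrite vB andbT.
apply/negbTE; apply/negP => /andP [xS xB]; move/negP: xS; apply.
by apply: (subsetP sub); rewrite !inE xB andbT; apply/eqP.
Qed.

Lemma Vstar_min L T : closedH L T -> Vstar L \subset T.
Proof.
move=> HT; rewrite /Vstar -/(st L #|V|).
elim: #|V| => [|k IH]; first by rewrite sub0set.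
rewrite /st iterS -/(st L k).
have Hi := inv_st L k.
rewrite /peel_round; case: pickP => [v Hv|//] /=.
rewrite subUset IH andbT sub1set.
have [H _] := Hi [set v] (set10 v); move: (H Hv) => {H} [_ [B' [HB' HBS']]].
apply: (HT B' HB').
  by move/setP: HBS' => /(_ v); rewrite !inE eqxx => /andP [].
apply/subsetP=> x; rewrite !inE => /andP [xv xB].
apply: (subsetP IH); move/setP: HBS' => /(_ x); rewrite !inE xB (negPf xv) andbT.
by move/negbT; rewrite negbK.
Qed.
Lemma closed_rem L A T : closedH L T -> closedH (remove_edge L A) T.
Proof.
move=> H B; rewrite ffunE; case: (B == A) => //; exact: H.
Qed.

Lemma closed_add L A T : closedH (remove_edge L A) T ->
  (forall v, v \in A -> A :\ v \subset T -> v \in T) -> closedH L T.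
Proof.
move=> H HA B HB; case: (eqVneq B A) => [->|nBA]; first exact: HA.
by apply: H; rewrite ffunE (negPf nBA).
Qed.

End Proof.

Theorem proposition4 (V : finType) (L : hypergraph V) (A : {set V}) :
  essential L A <-> (L A = 1 /\ #|A :\: Vstar (remove_edge L A)| = 1).
Proof.
set S' := Vstar (remove_edge L A).
have sub : S' \subset Vstar L by apply: Vstar_min; apply: closed_rem; apply: Vstar_closed.
split.
  case=> HA Hne; split => //.
  apply/eqP/negPn/negP => Hc; apply: Hne; apply/eqP; rewrite eqEsubset sub /=.
  apply: Vstar_min; apply: closed_add; first exact: Vstar_closed.
  move=> v vA Asub; apply/negPn/negP => vS; move/negP: Hc; apply.
  have -> : A :\: S' = [set v].
    apply/setP => x; rewrite !inE; case: (eqVneq x v) => [->|xv] /=.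
      by rewrite vA andbT.
    apply/negbTE/negP => /andP [xS xA]; move/negP: xS; apply.
    by apply: (subsetP Asub); rewrite !inE xv.
  by rewrite cards1.
case=> HA /eqP /cards1P [u Hu]; split => // Heq.
have : u \in A :\: S' by rewrite Hu inE.
rewrite inE => /andP [uS uA]; move/negP: uS; apply.
rewrite /S' Heq; apply: (Vstar_closed (B := A)); first by rewrite HA.
  exact: uA.
apply: subset_trans sub; apply/subsetP => x; rewrite !inE => /andP [xu xA].
apply/negPn/negP => xS.
have : x \in A :\: S' by rewrite inE xS xA.
by rewrite Hu inE (negPf xu).
Qed.
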